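(* A graph $G$ can be explained by a labeled level-1 network if and only if every induced subgraph of $G$ can be explained by a labeled level-1 network.
   Context: Graphs finite, simple, undirected. Network on finite $X$: a DAG $N=(V,E)$ with either $V=X=\{x\}$, or (N1) unique root of indegree 0, outdegree $\ge2$; (N2) $x\in X$ iff outdegree 0, indegree 1; (N3) every other non-root vertex has indegree 1 and outdegree $\ge2$, or indegree 2 (hybrid-vertex) and outdegree $\ge1$. Level-1: every biconnected component of the underlying undirected graph contains at most one hybrid-vertex; then the lowest common ancestor $\mathrm{lca}_N(x,y)$ (the minimal common ancestor w.r.t. the ancestor order) is unique. Labeled network: $t:V\to\{0,1,\odot\}$, $t(v)=\odot$ iff $v\in X$; it explains $G$ if $G$ is isomorphic to the graph on $X$ with $x\ne y$ adjacent iff $t(\mathrm{lca}_N(x,y))=1$. *)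

(* Defs.v *)
From mathcomp Require Import all_boot.
Set Implicit Arguments. Unset Strict Implicit. Unset Printing Implicit Defensive.

Inductive label := L0 | L1 | Lodot.

Section Networks.
Variable V : finType.
Variable E : rel V.

Definition indeg (v : V) : nat := #|[set u | E u v]|.
Definition outdeg (v : V) : nat := #|[set w | E v w]|.

Definition acyclic : Prop := forall u v, E u v -> ~~ connect E v u.

Definition is_root (r : V) : Prop := indeg r = 0.

Definition network_conditions (X : {set V}) : Prop :=
  (exists r, [/\ indeg r = 0, 2 <= outdeg r & forall v, indeg v = 0 -> v = r]) /\
  (forall x, x \in X <-> (outdeg x = 0 /\ indeg x = 1)) /\
  (forall v, indeg v != 0 -> v \notin X ->
     (indeg v = 1 /\ 2 <= outdeg v) \/ (indeg v = 2 /\ 1 <= outdeg v)).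

Definition is_network (X : {set V}) : Prop :=
  acyclic /\
  ((#|V| = 1 /\ X = [set: V]) \/ network_conditions X).

Definition hybrid (v : V) : bool := indeg v == 2.

Definition und : rel V := fun u v => E u v || E v u.

Definition connected_in (S : {set V}) : Prop :=
  forall x y, x \in S -> y \in S ->
    connect (fun a b => [&& a \in S, b \in S & und a b]) x y.

Definition biconnected (B : {set V}) : Prop :=
  connected_in B /\ forall v, v \in B -> connected_in (B :\ v).

Definition is_block (B : {set V}) : Prop :=
  biconnected B /\ forall B' : {set V}, B \subset B' -> biconnected B' -> B' = B.

Definition level1 : Prop :=
  forall B, is_block B -> #|[set h in B | hybrid h]| <= 1.

Definition ancestor (u v : V) : bool := connect E u v.

Definition common_ancestor (x y w : V) : bool := ancestor w x && ancestor w y.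

Definition is_lca (x y w : V) : Prop :=
  common_ancestor x y w /\
  forall w', common_ancestor x y w' -> ancestor w w' -> w' = w.

End Networks.

Definition explainable_level1 (T : finType) (e : rel T) : Prop :=
  exists (V : finType) (E : rel V) (X : {set V}) (t : V -> label) (phi : T -> V),
    [/\ is_network E X, level1 E,
        (forall v, t v = Lodot <-> v \in X),
        (injective phi /\ forall x, x \in X <-> exists a, phi a = x) &
        (forall a b, e a b <->
           (a != b /\ exists w, is_lca E (phi a) (phi b) w /\ t w = L1))].

Definition induced (T : finType) (e : rel T) (S : {set T}) : rel {x : T | x \in S} :=
  fun a b => e (val a) (val b).
Arguments induced {T} e S _ _.

(* Main.v *)
Require Import Defs.
From mathcomp Require Import all_boot.
From Stdlib Require Import Classical.
Set Implicit Arguments. Unset Strict Implicit. Unset Printing Implicit Defensive.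

Section Gen.
Variable V : finType.
Variable E : rel V.

Definition rr (A : {set V}) : rel V := fun a b => [&& a \in A, b \in A & und E a b].

Lemma rr_sym A : symmetric (rr A).
Proof. move=> a b; rewrite /rr /und; by case: (a \in A); case: (b \in A); rewrite //= orbC. Qed.

Lemma rr_conn_sym A x y : connect (rr A) x y = connect (rr A) y x.
Proof. exact: (sym_connect_sym (rr_sym A)). Qed.

Lemma path_mem_conn x p z : path E x p -> z \in x :: p -> connect E z (last x p).
Proof.
elim: p x => [|y p IH] x /=.
  by rewrite inE => _ /eqP ->.
move=> /andP [Hxy Hp]; rewrite inE => /orP [/eqP ->|Hz].
  exact: connect_trans (connect1 Hxy) (path_connect Hp (mem_last y p)).
exact: IH.
Qed.

Lemma path_lift (A : {set V}) x p : path E x p -> all (mem A) (x :: p) -> connect (rr A) x (last x p).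
Proof.
elim: p x => [|y p IH] x /=; first by rewrite connect0.
move=> /andP [Hxy Hp] /andP [HxA /andP [HyA Hall]].
apply: connect_trans (connect1 _) (IH _ Hp _); last by rewrite /= HyA.
by rewrite /rr HxA HyA /und Hxy.
Qed.

Lemma rr_mono (A B : {set V}) x y : A \subset B -> connect (rr A) x y -> connect (rr B) x y.
Proof.
move=> sAB; apply: connect_sub => a b /and3P [Ha Hb Hab]; apply: connect1.
by rewrite /rr (subsetP sAB _ Ha) (subsetP sAB _ Hb).
Qed.

Lemma hub_conn (A : {set V}) h : (forall y, y \in A -> connect (rr A) y h) -> connected_in E A.
Proof.
move=> H x y Hx Hy; change (connect (rr A) x y).
apply: connect_trans (H x Hx) _; rewrite rr_conn_sym; exact: H.
Qed.

Lemma last_pred w u : connect E w u -> w != u -> exists2 z, connect E w z & E z u.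
Proof.
move=> /connectP [p Hp ->]; elim/last_ind: p Hp => [|p y _] /=; first by rewrite eqxx.
rewrite rcons_path last_rcons => /andP [Hp Hl] _; exists (last w p) => //.
by apply/connectP; exists p.
Qed.

Hypothesis acyc : acyclic E.

Lemma Eirr a : E a a = false.
Proof. apply/negP => H; have := acyc H; by rewrite connect0. Qed.

Lemma ACY a b : connect E a b -> connect E b a -> a = b.
Proof.
move=> /connectP [p Hp ->] Hb.
case: p Hp Hb => [|z p] //= /andP [Haz Hp] Hb.
have := acyc Haz; move/negP; case.
exact: connect_trans (path_connect Hp (mem_last z p)) Hb.
Qed.

Lemma mca_exists u v w0 : connect E w0 u -> connect E w0 v ->
  exists w, [/\ connect E w u, connect E w v &
    forall w', connect E w' u -> connect E w' v -> connect E w w' -> w' = w].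
Proof.
move=> Hu Hv.
pose P := fun w => connect E w u && connect E w v.
have P0 : P w0 by rewrite /P Hu Hv.
case: (arg_maxnP (fun w => #|[set z | connect E z w]|) P0) => w /andP [Hwu Hwv] Hmax.
exists w; split => // w' Hw'u Hw'v Hww'.
case: (eqVneq w' w) => // Hne; exfalso.
have := Hmax w'; rewrite /P Hw'u Hw'v => /(_ isT) Hle.
have : [set z | connect E z w] \proper [set z | connect E z w'].
  apply/properP; split.
    apply/subsetP => z; rewrite !inE => Hz; exact: connect_trans Hz Hww'.
  exists w'; rewrite !inE ?connect0 //; apply/negP => Hw'w.
  by rewrite (ACY Hw'w Hww') eqxx in Hne.
by move/proper_card; rewrite ltnNge; move: Hle => /= ->.
Qed.

Section Interval.
Variables (w u v c : V).
Hypotheses (Huc : E u c) (Hvc : E v c) (Hwu : connect E w u) (Hwv : connect E w v).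
Hypothesis Hmin : forall w', connect E w' u -> connect E w' v -> connect E w w' -> w' = w.
Let I := [set x | connect E w x && connect E x c].

Lemma I_path a p : path E a p -> connect E w a -> connect E (last a p) c ->
  forall z, z \in a :: p -> z \in I.
Proof.
move=> Hp Hwa Hl z Hz; rewrite inE.
rewrite (connect_trans Hwa (path_connect Hp Hz)) /=.
exact: connect_trans (path_mem_conn Hp Hz) Hl.
Qed.

Lemma I_down x y : y \in I -> y != x -> ~~ connect E y x -> connect (rr (I :\ x)) y c.
Proof.
rewrite inE => /andP [Hwy Hyc] Hyx Hnc.
case/connectP: Hyc => p Hp Hl; rewrite Hl.
apply: path_lift => //; apply/allP => z Hz.
apply/setD1P; split; last by apply: (I_path Hp Hwy _ Hz); rewrite -Hl connect0.
apply/eqP => Ezx; rewrite -Ezx (path_connect Hp Hz) in Hnc; done.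
Qed.

Lemma I_up x y : y \in I -> y != x -> ~~ connect E x y -> connect (rr (I :\ x)) y w.
Proof.
rewrite inE => /andP [Hwy Hyc] Hyx Hnc.
case/connectP: Hwy => p Hp Hl; rewrite rr_conn_sym Hl.
apply: path_lift => //; apply/allP => z Hz.
apply/setD1P; split; last by apply: (I_path Hp (connect0 _ _) _ Hz); rewrite -Hl.
apply/eqP => Ezx; rewrite -Ezx Hl (path_mem_conn Hp Hz) in Hnc; done.
Qed.

Lemma I_wc x t : E t c -> connect E w t -> x != c -> ~~ connect E x t ->
  connect (rr (I :\ x)) w c.
Proof.
move=> Htc Hwt Hxc Hnc.
case/connectP: Hwt => p Hp Hl.
have HI : forall z, z \in w :: p -> z \in I :\ x.
  move=> z Hz; apply/setD1P; split; last by apply: (I_path Hp (connect0 _ _) _ Hz); rewrite -Hl (connect1 Htc).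
  apply/eqP => Ezx; rewrite -Ezx Hl (path_mem_conn Hp Hz) in Hnc; done.
apply: connect_trans (path_lift Hp (introT allP HI)) (connect1 _).
have Ht : t \in I :\ x by apply: HI; rewrite Hl mem_last.
have Hc : c \in I :\ x.
  apply/setD1P; split; first by rewrite eq_sym.
  rewrite inE connect0 andbT; apply: connect_trans (connect1 Htc).
  rewrite Hl; exact: (path_connect Hp (mem_last _ _)).
by rewrite -Hl /rr Ht Hc /und Htc.
Qed.

Lemma interval_bic : biconnected E I.
Proof.
have Hwc : connect E w c := connect_trans Hwu (connect1 Huc).
split.
  apply: (@hub_conn _ c) => y; rewrite inE => /andP [Hwy Hyc].
  case/connectP: Hyc => p Hp Hl; rewrite Hl; apply: path_lift => //.
  apply/allP => z Hz; apply: (I_path Hp Hwy _ Hz); by rewrite -Hl connect0.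
move=> x HxI.
have Hhub : forall y, y \in I :\ x -> connect (rr (I :\ x)) y c \/ connect (rr (I :\ x)) y w.
  move=> y /setD1P [Hyx HyI].
  case Hc1: (connect E y x); last by left; apply: I_down; rewrite ?Hc1.
  case Hc2: (connect E x y); last by right; apply: I_up; rewrite ?Hc2.
  by rewrite (ACY Hc1 Hc2) eqxx in Hyx.
case: (eqVneq x w) => [->|Hxw].
  apply: (@hub_conn _ c) => y /setD1P [Hyx]; rewrite inE => /andP [Hwy Hyc].
  apply: I_down; rewrite ?inE ?Hwy ?Hyc //; apply/negP => Hyw.
  by rewrite (ACY Hyw Hwy) eqxx in Hyx.
case: (eqVneq x c) => [->|Hxc].
  apply: (@hub_conn _ w) => y /setD1P [Hyx]; rewrite inE => /andP [Hwy Hyc].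
  apply: I_up; rewrite ?inE ?Hwy ?Hyc //; apply/negP => Hcy.
  by rewrite (ACY Hyc Hcy) eqxx in Hyx.
have Hwc' : connect (rr (I :\ x)) w c.
  case Hxu: (connect E x u); last by apply: (I_wc Huc Hwu Hxc); rewrite Hxu.
  case Hxv: (connect E x v); last by apply: (I_wc Hvc Hwv Hxc); rewrite Hxv.
  move: HxI; rewrite inE => /andP [Hwx _].
  by rewrite (Hmin Hxu Hxv Hwx) eqxx in Hxw.
apply: (@hub_conn _ c) => y Hy; case: (Hhub y Hy) => // H.
exact: connect_trans H Hwc'.
Qed.
End Interval.

Lemma block_ext B : biconnected E B -> exists2 B0, is_block E B0 & B \subset B0.
Proof.
move: {2}#|~: B| (leqnn #|~: B|) => n; elim: n B => [|n IH] B Hn HB.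
  exists B => //; split => // B' HBB' _; apply/eqP; rewrite eqEsubset HBB' andbT.
  move: Hn; rewrite leqn0 cards_eq0 => /eqP HC.
  apply/subsetP => x _; apply/negPn/negP => Hx.
  have : x \in ~: B by rewrite inE.
  by rewrite HC inE.
case: (classic (is_block E B)) => Hb; first by exists B.
have [B' [HBB' HB' Hne]] : exists B' : {set V}, [/\ B \subset B', biconnected E B' & B' <> B].
  apply: NNPP => Hn'; apply: Hb; split => // B' H1 H2.
  apply: NNPP => H3; apply: Hn'; by exists B'.
have Hpr : B \proper B' by rewrite properEneq HBB' andbT eq_sym; apply/eqP.
have : #|~: B'| <= n.
  rewrite -ltnS; apply: leq_trans Hn; apply: proper_card; by rewrite properC.
case/(IH _)/(_ HB') => B0 H0 HB0; exists B0 => //; exact: subset_trans HBB' HB0.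
Qed.

Lemma lv_of_level1 : level1 E -> forall B, biconnected E B -> #|[set h in B | hybrid E h]| <= 1.
Proof.
move=> HL B HB; case: (block_ext HB) => B0 HB0 Hs.
apply: leq_trans (HL _ HB0); apply: subset_leq_card; apply/subsetP => h.
rewrite !inE => /andP [Hh ->]; by rewrite (subsetP Hs _ Hh).
Qed.

End Gen.

Lemma first_step (V : finType) (E : rel V) a b : connect E a b -> a != b -> exists2 z, E a z & connect E z b.
Proof.
move=> /connectP [[|z p] /= Hp ->]; first by rewrite eqxx.
move/andP: Hp => [Haz Hp] _; exists z => //; apply/connectP; by exists p.
Qed.

Section Del.
Variables (V : finType) (E : rel V) (v : V).
Hypothesis acyc : acyclic E.
Hypothesis H1 : forall y y', E v y -> E v y' -> y = y'.
Hypothesis H2 : forall y x x', E v y -> E x v -> E x' v -> x = x'.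

Definition DT : finType := {x : V | x != v}.
Definition DE : rel DT := fun x y => E (val x) (val y) || (E (val x) v && E v (val y)).

Lemma D_fwd x y : connect DE x y -> connect E (val x) (val y).
Proof.
move=> /connectP [p Hp ->]; elim: p x Hp => [|z p IH] x /=; first by rewrite connect0.
move=> /andP [Hxz Hp]; apply: connect_trans (IH _ Hp).
case/orP: Hxz => [H|/andP [H H']]; first exact: connect1.
exact: connect_trans (connect1 H) (connect1 H').
Qed.

Lemma D_bwd x y : connect E (val x) (val y) -> connect DE x y.
Proof.
move=> /connectP [p Hp Hl].
move: {2}(size p) (leqnn (size p)) => n.
elim: n x p Hp Hl => [|n IH] x [|z p] //= Hp Hl Hn; try by rewrite (val_inj Hl) connect0.
move/andP: Hp => [Hxz Hp].
case: (eqVneq z v) => [Ezv|Hzv].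
  subst z; case: p Hp Hl Hn => [|z2 p] /=.
    move=> _ Hl; exfalso; move: (valP y); rewrite /= -/(val y) Hl eqxx; done.
  move=> /andP [Hvz Hp] Hl Hn.
  have Hz2 : z2 != v by apply/eqP => E2; rewrite E2 (Eirr acyc) in Hvz.
  have Hd : DE x (exist _ z2 Hz2) by rewrite /DE /= Hxz Hvz orbT.
  apply: connect_trans (connect1 Hd) (IH (exist _ z2 Hz2) p Hp Hl _).
  by move: Hn => /= /ltnW.
have Hd : DE x (exist _ z Hzv) by rewrite /DE /= Hxz.
exact: connect_trans (connect1 Hd) (IH (exist _ z Hzv) p Hp Hl Hn).
Qed.

Lemma D_conn x y : connect DE x y = connect E (val x) (val y).
Proof. by apply/idP/idP; [apply: D_fwd | apply: D_bwd]. Qed.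

Lemma D_acyc : acyclic DE.
Proof.
move=> x y Hxy; apply/negP => /D_fwd Hyx.
case/orP: Hxy => [H|/andP [H H']].
  by move: (acyc H); rewrite Hyx.
by move: (acyc H); rewrite (connect_trans (connect1 H') Hyx).
Qed.

Lemma D_indeg (y : DT) : indeg DE y <= indeg E (val y).
Proof.
rewrite /indeg -(card_imset _ val_inj).
case Hvy: (E v (val y)).
  have Hsub : val @: [set x | DE x y] \subset ([set u | E u (val y)] :\ v) :|: [set u | E u v].
    apply/subsetP => ? /imsetP [x Hx ->]; rewrite inE in Hx.
    rewrite !inE (valP x) /=; case/orP: Hx => [->|/andP [-> _]]; by rewrite ?orbT.
  apply: leq_trans (subset_leq_card Hsub) _.
  rewrite cardsU; apply: leq_trans (leq_subr _ _) _.
  rewrite (cardsD1 v [set u | E u (val y)]) inE Hvy addnC leq_add2r.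
  apply/card_le1_eqP => a b; rewrite !inE => Ha Hb. exact: H2 Hvy Hb Ha.
apply: subset_leq_card; apply/subsetP => ? /imsetP [x Hx ->]; rewrite !inE in Hx *.
by case/orP: Hx => [//|/andP [_ H]]; rewrite H in Hvy.
Qed.

Lemma D_hyb (Hdeg : forall u, indeg E u <= 2) (y : DT) : hybrid DE y -> hybrid E (val y).
Proof.
rewrite /hybrid => /eqP H; rewrite eqn_leq Hdeg /= -H; exact: D_indeg.
Qed.

Lemma D_root (x0 : DT) : (exists r, forall y, connect E r y) -> exists r' : DT, forall y, connect DE r' y.
Proof.
case=> r Hr.
case: (eqVneq r v) => [Erv|Hrv]; last by exists (exist _ r Hrv) => y; apply: D_bwd; exact: Hr.
subst r.
have [c Hvc _] := first_step (Hr (val x0)) ltac:(by rewrite eq_sym (valP x0)).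
have Hc : c != v by apply/eqP => Ec; rewrite Ec (Eirr acyc) in Hvc.
exists (exist _ c Hc) => y; apply: D_bwd => /=.
have [c' Hvc' Hc'y] := first_step (Hr (val y)) ltac:(by rewrite eq_sym (valP y)).
by rewrite (H1 Hvc Hvc').
Qed.

Lemma v_child (x y : DT) : connect E v (val x) -> connect E v (val y) ->
  exists2 c, E v c & connect E c (val x) && connect E c (val y).
Proof.
move=> Hx Hy.
have [c Hvc Hcx] := first_step Hx ltac:(by rewrite eq_sym (valP x)).
have [c' Hvc' Hcy] := first_step Hy ltac:(by rewrite eq_sym (valP y)).
by exists c => //; rewrite Hcx (H1 Hvc Hvc') Hcy.
Qed.

Lemma v_not_lca (x y : DT) : ~ is_lca E (val x) (val y) v.
Proof.
rewrite /is_lca /common_ancestor /ancestor; case=> /andP [Hvx Hvy] Hmin.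
have [c Hvc Hc] := v_child Hvx Hvy.
have := Hmin c Hc (connect1 Hvc) => Ecv.
by rewrite Ecv (Eirr acyc) in Hvc.
Qed.

Lemma D_lca (x y w : DT) : is_lca DE x y w <-> is_lca E (val x) (val y) (val w).
Proof.
rewrite /is_lca /common_ancestor /ancestor !D_conn; split; case=> Hc Hmin; split => //.
  move=> w''; case: (eqVneq w'' v) => [->|Hw].
    move=> /andP [Hvx Hvy] Hwv; exfalso.
    have [c Hvc /andP [Hcx Hcy]] := v_child Hvx Hvy.
    have Hcv : c != v by apply/eqP => Ec; rewrite Ec (Eirr acyc) in Hvc.
    have := Hmin (exist _ c Hcv); rewrite !D_conn /= Hcx Hcy.
    move=> /(_ isT (connect_trans Hwv (connect1 Hvc))) Ecw.
    subst w; move: Hwv => /= Hwv; by move: (acyc Hvc); rewrite Hwv.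
  move=> Hca Hww; have := Hmin (exist _ w'' Hw); rewrite !D_conn /=.
  by move=> /(_ Hca Hww) <-.
move=> w'' Hca Hww; apply: val_inj; apply: Hmin => //; by rewrite -!D_conn.
Qed.


Hypothesis Hroot : exists r, forall y, connect E r y.
Hypothesis Hdeg : forall u, indeg E u <= 2.
Hypothesis HLV : forall B, biconnected E B -> #|[set h in B | hybrid E h]| <= 1.

Lemma lift_gen (A' : {set DT}) (W : {set V}) :
  (forall a, a \in A' -> val a \in W) ->
  (forall a b, a \in A' -> b \in A' -> DE a b -> connect (rr E W) (val a) (val b)) ->
  forall x y, connect (rr DE A') x y -> connect (rr E W) (val x) (val y).
Proof.
move=> HW Hst x y /connectP [p Hp ->]; elim: p x Hp => [|z p IH] x /=; first by rewrite connect0.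
move=> /andP [/and3P [Hx Hz Hxz] Hp]; apply: connect_trans (IH _ Hp).
case/orP: Hxz => H; first exact: Hst.
rewrite rr_conn_sym; exact: Hst.
Qed.

Lemma lift_v (A' : {set DT}) (W : {set V}) : v \in W -> (forall a, a \in A' -> val a \in W) ->
  forall x y, connect (rr DE A') x y -> connect (rr E W) (val x) (val y).
Proof.
move=> HvW HW; apply: lift_gen => // a b Ha Hb.
case/orP => [H|/andP [H H']].
  by apply: connect1; rewrite /rr !HW // /und H.
apply: (@connect_trans _ _ v); apply: connect1; by rewrite /rr ?HW // HvW /und ?H ?H' ?orbT.
Qed.

Lemma lift_free (A' : {set DT}) (W : {set V}) : (forall a, a \in A' -> val a \in W) ->
  (forall a b, a \in A' -> b \in A' -> DE a b -> E (val a) (val b)) ->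
  forall x y, connect (rr DE A') x y -> connect (rr E W) (val x) (val y).
Proof.
move=> HW Hf; apply: lift_gen => // a b Ha Hb Hab.
by apply: connect1; rewrite /rr !HW // /und (Hf a b).
Qed.

Lemma hyb_transfer (B' : {set DT}) (W : {set V}) : (forall a, a \in B' -> val a \in W) ->
  #|[set h in B' | hybrid DE h]| <= #|[set h in W | hybrid E h]|.
Proof.
move=> HW; rewrite -(card_imset _ val_inj); apply: subset_leq_card.
apply/subsetP => ? /imsetP [x Hx ->]; rewrite !inE in Hx *.
case/andP: Hx => Hx Hh; by rewrite HW // (D_hyb Hdeg).
Qed.

Lemma D_LV_free (B' : {set DT}) : biconnected DE B' ->
  (forall a b, a \in B' -> b \in B' -> DE a b -> E (val a) (val b)) ->
  #|[set h in B' | hybrid DE h]| <= 1.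
Proof.
move=> [Hc Hrem] Hf.
apply: leq_trans (hyb_transfer (W := val @: B') _) _; first by move=> a Ha; exact: imset_f.
apply: HLV; split.
  move=> _ _ /imsetP [x Hx ->] /imsetP [y Hy ->].
  apply: (lift_free (A' := B')) => //; [move=> ? ?; exact: imset_f | exact: Hc].
move=> _ /imsetP [x0 Hx0 ->] x1 y1 /setD1P [Hx HxB] /setD1P [Hy HyB].
case/imsetP: HxB => x Hx' Ex; case/imsetP: HyB => y Hy' Ey; subst x1 y1.
apply: (lift_free (A' := B' :\ x0)).
- move=> a /setD1P [Ha1 Ha2]; rewrite !inE imset_f // andbT; by rewrite (inj_eq val_inj).
- move=> a b /setD1P [_ Ha] /setD1P [_ Hb]; exact: Hf.
- apply: (Hrem x0 Hx0); rewrite !inE ?Hx' ?Hy' andbT -(inj_eq val_inj) //.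
Qed.

Lemma D_LV (B' : {set DT}) : biconnected DE B' -> #|[set h in B' | hybrid DE h]| <= 1.
Proof.
move=> HB'.
case: (classic (exists a b, [/\ a \in B', b \in B', DE a b & ~~ E (val a) (val b)]));
  last first.
  move=> Hfree; apply: D_LV_free => // a b Ha Hb Hab.
  apply: NNPP => H; apply: Hfree; exists a, b; split => //; exact/negP.
case=> a [b [Ha Hb Hab Hn]].
move: Hab; rewrite /DE (negbTE Hn) /= => /andP [Hav Hvb].
have Hpar : forall x, E x v -> x = val a by move=> x Hx; exact: H2 Hvb Hx Hav.
have Hch : forall y, E v y -> y = val b by move=> y Hy; exact: H1 Hy Hvb.
have Hab : a != b.
  apply/eqP => Eab; subst b; move: (acyc Hvb); by rewrite (connect1 Hav).
case: HB' => Hc Hrem.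
case: (leqP #|B'| 2) => Hcard; last first.
  pose W := v |: val @: B'.
  have HW : forall x, x \in B' -> val x \in W by move=> x Hx; rewrite !inE imset_f ?orbT.
  apply: leq_trans (hyb_transfer HW) _; apply: HLV; split.
    apply: (@hub_conn _ _ _ (val a)) => y; rewrite !inE => /orP [/eqP ->|/imsetP [y' Hy' ->]].
      by apply: connect1; rewrite /rr HW // /und Hav orbT andbT !inE eqxx.
    apply: (lift_v (A' := B')); rewrite ?inE ?eqxx //; exact: Hc.
  have [z Hz] : exists z, z \in B' :\ a :\ b.
    apply/card_gt0P; move: Hcard; rewrite (cardsD1 a) Ha (cardsD1 b (B' :\ a)) !inE eq_sym Hab Hb.
    by rewrite !add1n !ltnS.
  move: Hz; rewrite !inE => /and3P [Hzb Hza HzB].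
  move=> xx; rewrite !inE => /orP [/eqP ->|/imsetP [x0 Hx0 ->]].
    apply: (@hub_conn _ _ _ (val z)) => y; rewrite !inE => /andP [Hyv /orP [/eqP Eyv|/imsetP [y' Hy' Ey]]].
      by rewrite Eyv eqxx in Hyv.
    subst y.
    have HW' : forall x, x \in B' -> val x \in W :\ v.
      by move=> x1 Hx1; apply/setD1P; split; [exact: (valP x1) | exact: HW].
    case: (eqVneq y' a) => [->|Hy'a].
      apply: (lift_free (A' := B' :\ b)).
      - by move=> x /setD1P [_ Hx]; exact: HW'.
      - move=> x y /setD1P [Hxb Hx] /setD1P [Hyb Hy] /orP [//|/andP [_ Hvy]].
        by rewrite (val_inj (Hch _ Hvy)) eqxx in Hyb.
      - by apply: (Hrem b Hb); rewrite !inE ?Ha ?HzB ?andbT // eq_sym.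
    apply: (lift_free (A' := B' :\ a)).
    - by move=> x /setD1P [_ Hx]; exact: HW'.
    - move=> x y /setD1P [Hxa Hx] /setD1P [Hya Hy] /orP [//|/andP [Hxv _]].
      by rewrite (val_inj (Hpar _ Hxv)) eqxx in Hxa.
    - by apply: (Hrem a Ha); rewrite !inE ?Hy' ?HzB ?andbT.
  have Hvx : v \in W :\ val x0 by rewrite !inE eqxx andbT eq_sym (valP x0).
  have HWx : forall x, x \in B' :\ x0 -> val x \in W :\ val x0.
    by move=> x /setD1P [Hx1 Hx2]; apply/setD1P; split; [rewrite (inj_eq val_inj) | exact: HW].
  pose h := if x0 == a then b else a.
  have Hh : h \in B' :\ x0.
    rewrite /h; case: eqP => [->|/eqP Hne]; rewrite !inE ?Hb ?Ha ?andbT //.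
    by rewrite eq_sym.
    by rewrite eq_sym.
  apply: (@hub_conn _ _ _ (val h)) => y; rewrite !inE => /andP [Hyx /orP [/eqP ->|/imsetP [y' Hy' Ey]]].
    apply: connect1; rewrite /rr Hvx HWx // /und /h.
    by case: eqP => _; rewrite ?Hvb ?Hav ?orbT.
  subst y; apply: (lift_v (A' := B' :\ x0)) => //.
  apply: (Hrem x0 Hx0) => //; rewrite !inE Hy' andbT; by rewrite (inj_eq val_inj) in Hyx.
have Hsub : forall x, x \in B' -> ~~ hybrid DE x -> #|[set h in B' | hybrid DE h]| <= 1.
  move=> x Hx Hnh; apply: leq_trans (_ : #|B' :\ x| <= 1).
    apply: subset_leq_card; apply/subsetP => h; rewrite !inE => /andP [HhB Hh].
    rewrite HhB andbT; apply/eqP => Ehx; by rewrite -Ehx Hh in Hnh.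
  by move: Hcard; rewrite (cardsD1 x) Hx.
case Hha: (hybrid DE a); last by apply: (Hsub a) => //; rewrite Hha.
case Hhb: (hybrid DE b); last by apply: (Hsub b) => //; rewrite Hhb.
exfalso.
have : 1 < #|[set x | DE x b]| by move: Hhb; rewrite /hybrid /indeg => /eqP ->.
case/card_gt1P => x1 [x2 [Hx1 Hx2 Hx12]].
have [u' Hu' Hu'a] : exists2 u', DE u' b & u' != a.
  case: (eqVneq x1 a) => [Ex1|Hx1a]; last by exists x1; rewrite inE in Hx1.
  exists x2; first by rewrite inE in Hx2.
  by rewrite -Ex1 eq_sym.
have Hub : E (val u') (val b).
  case/orP: Hu' => // /andP [Huv _]; by rewrite (val_inj (Hpar _ Huv)) eqxx in Hu'a.
set u := val u' in Hub.
have [r Hr] := Hroot.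
have [w [Hwu Hwv Hmin]] := mca_exists acyc (Hr u) (Hr v).
have HI := interval_bic acyc Hub Hvb Hwu Hwv Hmin.
have Hwnv : w != v.
  apply/eqP => Ewv; subst w.
  have [z Hvz Hzu] := first_step Hwu ltac:(by rewrite eq_sym (valP u')).
  rewrite (Hch _ Hvz) in Hzu.
  by move: (acyc Hub); rewrite Hzu.
have Hwa : connect E w (val a).
  have [z Hwz Hzv] := last_pred Hwv Hwnv; by rewrite -(Hpar _ Hzv).
have Hac : connect E (val a) (val b) := connect_trans (connect1 Hav) (connect1 Hvb).
have := HI; move/HLV; apply/negP; rewrite -ltnNge; apply/card_gt1P.
exists (val a), (val b); rewrite !inE Hwa Hac connect0 (connect_trans Hwa Hac) /=.
rewrite !(D_hyb Hdeg) //.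
Qed.

End Del.

Record prenet (Ts : finType) (et : rel Ts) (V : finType) (E : rel V) (psi : Ts -> V)
  (t : V -> label) : Prop := Prenet {
  pn_acyc : acyclic E;
  pn_root : exists r, forall y, connect E r y;
  pn_deg : forall u, indeg E u <= 2;
  pn_lv : forall B, biconnected E B -> #|[set h in B | hybrid E h]| <= 1;
  pn_inj : injective psi;
  pn_leaf : forall a, outdeg E (psi a) = 0 /\ indeg E (psi a) <= 1;
  pn_lab : forall a b, et a b <-> a != b /\ exists w, is_lca E (psi a) (psi b) w /\ t w = L1
}.

Lemma out0 (V : finType) (E : rel V) x y : outdeg E x = 0 -> E x y = false.
Proof.
rewrite /outdeg => /card0_eq /(_ y); rewrite !inE; by move=> ->.
Qed.

Lemma le1_eq (V : finType) (A : {set V}) x y : #|A| <= 1 -> x \in A -> y \in A -> x = y.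
Proof. by move/card_le1_eqP => H Hx Hy; apply: (H _ _ Hy Hx). Qed.

Lemma reduce_step (Ts : finType) (et : rel Ts) (a0 : Ts) (V : finType) (E : rel V) psi t (v : V)
  (Hpsi : forall a, psi a != v) :
  (outdeg E v = 0 \/ (outdeg E v = 1 /\ indeg E v <= 1)) ->
  prenet et E psi t ->
  prenet et (DE E (v:=v)) (fun a => exist (fun x => x != v) (psi a) (Hpsi a)) (fun w => t (val w)).
Proof.
move=> Hrem [Hacyc Hroot Hdeg HLV Hinj Hleaf Hlab].
have H1 : forall y y', E v y -> E v y' -> y = y'.
  move=> y1 y2 Hy Hy'; case: Hrem => [H|[H _]]; first by rewrite (out0 _ H) in Hy.
  apply: (le1_eq (A := [set w | E v w])); rewrite ?inE //; by move: H; rewrite /outdeg => ->.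
have H2 : forall y x x', E v y -> E x v -> E x' v -> x = x'.
  move=> y1 x1 x2 Hy Hx Hx'; case: Hrem => [H|[_ H]]; first by rewrite (out0 _ H) in Hy.
  apply: (le1_eq (A := [set w | E w v])); rewrite ?inE //.
split.
- exact: D_acyc.
- exact: (D_root Hacyc H1 (exist _ (psi a0) (Hpsi a0))).
- move=> u; apply: leq_trans (D_indeg H2 u) (Hdeg _).
- move=> B; exact: D_LV.
- move=> a b /(congr1 val) /= /Hinj; done.
- move=> a; have [Ho Hi] := Hleaf a; split; last exact: leq_trans (D_indeg H2 _) Hi.
  apply/eqP; rewrite cards_eq0; apply/eqP/setP => y; rewrite !inE /DE /= !(out0 _ Ho) //.
- move=> a b; rewrite Hlab; split; case=> Hab [w [Hw Hl]]; split => //.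
    have Hwv : w != v.
      apply/eqP => Ewv; subst w.
      exact: (v_not_lca Hacyc H1 (x := exist _ (psi a) (Hpsi a)) (y := exist _ (psi b) (Hpsi b))).
    exists (exist _ w Hwv); split => //; exact/(D_lca Hacyc H1).
  by exists (val w); split => //; move/(D_lca Hacyc H1): Hw.
Qed.

Lemma root_indeg0 (V : finType) (E : rel V) r : acyclic E -> (forall y, connect E r y) ->
  indeg E r = 0 /\ forall y, indeg E y = 0 -> y = r.
Proof.
move=> Hac Hr; split.
  apply/eqP; rewrite cards_eq0; apply/eqP/setP => u; rewrite !inE.
  apply/negP => Hu; by move: (Hac _ _ Hu); rewrite Hr.
move=> y Hy; case: (eqVneq y r) => // Hne.
have [z _ Hz] := last_pred (Hr y) ltac:(by rewrite eq_sym).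
by move: Hy => /card0_eq /(_ z); rewrite !inE Hz.
Qed.

Lemma final (Ts : finType) (et : rel Ts) (a0 : Ts) (V : finType) (E : rel V) psi t :
  prenet et E psi t ->
  (forall v, (forall a, psi a != v) -> ~ (outdeg E v = 0 \/ (outdeg E v = 1 /\ indeg E v <= 1))) ->
  explainable_level1 et.
Proof.
move=> [Hacyc [r Hr] Hdeg HLV Hinj Hleaf Hlab] Hnr.
have [Hr0 Hruniq] := root_indeg0 Hacyc Hr.
pose X := [set psi a | a in Ts].
have HX : forall x, x \in X <-> exists a, psi a = x.
  move=> x; split; [by case/imsetP => a _ ->; exists a | by case=> a <-; apply: imset_f].
have Hsink : forall x y, outdeg E x = 0 -> connect E x y -> y = x.
  move=> x y H Hc; case: (eqVneq y x) => // Hne.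
  have [z Hz _] := first_step Hc ltac:(by rewrite eq_sym).
  by rewrite (out0 _ H) in Hz.
have HlcaX : forall a b w, a != b -> is_lca E (psi a) (psi b) w -> w \notin X.
  move=> a b w Hab [/andP [Hwa Hwb] _]; apply/negP => /HX [c Ec]; subst w.
  have Ho := (Hleaf c).1.
  move: (Hsink _ _ Ho Hwa) (Hsink _ _ Ho Hwb) => Ea Eb.
  by rewrite (Hinj _ _ Ea) (Hinj _ _ Eb) eqxx in Hab.
pose t' := fun w => if w \in X then Lodot else match t w with Lodot => L0 | l => l end.
exists V, E, X, t', psi; split.
- split => //.
  case: (leqP #|V| 1) => Hc.
    left; split.
      have : 0 < #|V| by apply/card_gt0P; exists (psi a0).
      by move: Hc; case: #|V| => [|[|]].
    apply/setP => x; rewrite inE; apply/HX; exists a0.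
    by apply: (le1_eq (A := [set: V])); rewrite ?cardsT ?inE.
  right.
  have HrX : forall a, psi a != r.
    move=> a; apply/eqP => Ea.
    have Ho := (Hleaf a).1; rewrite Ea in Ho.
    case/card_gt1P: Hc => x [y [_ _ Hxy]].
    by rewrite (Hsink _ _ Ho (Hr x)) (Hsink _ _ Ho (Hr y)) eqxx in Hxy.
  split; last split.
  + exists r; split => //.
    case H: (outdeg E r) => [|[|n]] //; exfalso; apply: (Hnr r HrX); [left | right] => //.
    by rewrite Hr0.
  + move=> x; split.
      move/HX => [a <-]; have [Ho Hi] := Hleaf a; split => //.
      case H: (indeg E (psi a)) Hi => [|[|n]] // _.
      by move: (HrX a); rewrite (Hruniq _ H) eqxx.
    move=> [Ho Hi]; apply: NNPP => HxX; apply: (Hnr x); last by left.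
    move=> a; apply/eqP => Ea; apply: HxX; apply/HX; by exists a.
  + move=> u Hu HuX.
    have Hpsi : forall a, psi a != u.
      move=> a; apply/eqP => Ea; move/negP: HuX; apply; apply/HX; by exists a.
    have := Hnr u Hpsi; have := Hdeg u; move: Hu.
    case: (indeg E u) => [|[|[|n]]] //= _ _ Hn.
      left; split => //; case H: (outdeg E u) => [|[|n]] //; exfalso; apply: Hn; by [left|right].
    right; split => //; case H: (outdeg E u) => [|n] //; exfalso; apply: Hn; by left.
- by move=> B [Hb _]; exact: HLV.
- move=> w; rewrite /t'; case: (w \in X) => //; by case: (t w).
- by split.
- move=> a b; rewrite Hlab; split; case=> Hab [w [Hw Hl]]; split => //; exists w; split => //.
    by rewrite /t' (negbTE (HlcaX _ _ _ Hab Hw)) Hl.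
  by move: Hl; rewrite /t' (negbTE (HlcaX _ _ _ Hab Hw)); case: (t w).
Qed.

Lemma reduce (Ts : finType) (et : rel Ts) (a0 : Ts) n : forall (V : finType) (E : rel V) psi t,
  #|V| <= n -> prenet et E psi t -> explainable_level1 et.
Proof.
elim: n => [|n IH] V E psi t Hc Hpn.
  by move: Hc; rewrite leqn0 => /eqP/card0_eq/(_ (psi a0)).
case: (classic (exists v, (forall a, psi a != v) /\ (outdeg E v = 0 \/ (outdeg E v = 1 /\ indeg E v <= 1)))).
  case=> v [Hpsi Hrem].
  apply: (IH _ _ _ _ _ (reduce_step a0 Hpsi Hrem Hpn)).
  rewrite /DT card_sig cardC1; by move: Hc; case: #|V|.
move=> Hn; apply: (final a0 Hpn) => v Hpsi Hrem; apply: Hn; by exists v.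
Qed.

Lemma root_reach (V : finType) (E : rel V) r : acyclic E -> (forall v, indeg E v = 0 -> v = r) ->
  forall y, connect E r y.
Proof.
move=> Hac Hu y; move: {2}#|[set z | connect E z y]| (leqnn #|[set z | connect E z y]|) => n.
elim: n y => [|n IH] y Hn.
  by move: Hn; rewrite leqn0 => /eqP/card0_eq/(_ y); rewrite !inE connect0.
case: (eqVneq y r) => [->|Hne]; first exact: connect0.
have : 0 < indeg E y.
  rewrite lt0n; apply/negP => /eqP/Hu Eyr; by rewrite Eyr eqxx in Hne.
case/card_gt0P => u; rewrite inE => Huy.
apply: connect_trans (IH u _) (connect1 Huy).
rewrite -ltnS; apply: leq_trans Hn; apply: proper_card; apply/properP; split.
  apply/subsetP => z; rewrite !inE => Hz; exact: connect_trans Hz (connect1 Huy).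
exists y; rewrite !inE ?connect0 //; exact: Hac.
Qed.

Lemma init (T : finType) (e : rel T) (S : {set T}) (V : finType) (E : rel V) (X : {set V})
  (t : V -> label) (phi : T -> V) :
  is_network E X -> level1 E -> injective phi -> (forall x, x \in X <-> exists a, phi a = x) ->
  (forall a b, e a b <-> (a != b /\ exists w, is_lca E (phi a) (phi b) w /\ t w = L1)) ->
  prenet (induced e S) E (fun a => phi (val a)) t.
Proof.
move=> [Hac Hnet] HL Hinj HX Hlab.
have HXa : forall a, phi a \in X by move=> a; apply/HX; exists a.
have [Hroot Hdeg Hleaf] : [/\ exists r, forall y, connect E r y, forall u, indeg E u <= 2 &
    forall a, outdeg E (phi a) = 0 /\ indeg E (phi a) <= 1].
  case: Hnet => [[H1 HXT]|[[r [Hr0 _ Hru]] [HN2 HN3]]].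
    have Hall : forall x y : V, x = y by move=> x y; apply: (le1_eq (A := [set: V])); rewrite ?cardsT ?H1 ?inE.
    have Hle : forall A : {set V}, #|A| <= 1 by move=> A; rewrite -H1 max_card.
    split.
    - have [r _] : exists r : V, r \in [set: V] by apply/card_gt0P; rewrite cardsT H1.
      by exists r => y; rewrite (Hall r y) connect0.
    - move=> u; exact: leq_trans (Hle _) _.
    - move=> a; split; last exact: Hle.
      apply/eqP; rewrite /outdeg cards_eq0; apply/eqP/setP => y.
      by rewrite !inE (Hall y (phi a)) (Eirr Hac).
  split.
  - exists r; apply: root_reach => //.
  - move=> u; case: (eqVneq (indeg E u) 0) => [->//|Hu].
    case HuX: (u \in X); first by move/HN2: HuX => [_ ->].
    case: (HN3 u Hu (negbT HuX)) => [[-> _]|[-> _]] //.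
  - by move=> a; move/HN2: (HXa a) => [-> ->].
split => //.
- move=> B; exact: lv_of_level1.
- by move=> a b /Hinj /val_inj.
- move=> a b; have := Hlab (val a) (val b); rewrite (inj_eq val_inj); exact.
Qed.

Theorem mainTheorem17 (T : finType) (e : rel T) :
  symmetric e -> irreflexive e -> 0 < #|T| ->
  (explainable_level1 e <->
   forall S : {set T}, S != set0 -> explainable_level1 (induced e S)).
Proof.
move=> _ _ HT; split.
  move=> [V [E [X [t [phi [Hnet HL Ht [Hinj HX] Hlab]]]]]] S HS.
  have [a0 Ha0] := set0Pn _ HS.
  exact: (reduce (exist _ a0 Ha0) (leqnn #|V|) (init S Hnet HL Hinj HX Hlab)).
move=> H.
have HS : [set: T] != set0 by rewrite -card_gt0 cardsT.
case: (H _ HS) => V [E [X [t [phi [Hnet HL Ht [Hinj HX] Hlab]]]]].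
pose f (a : T) : {x : T | x \in [set: T]} := exist _ a (in_setT a).
exists V, E, X, t, (fun a => phi (f a)); split => //.
  split; first by move=> a b /Hinj /(congr1 val).
  move=> x; rewrite HX; split; case=> a Ha.
    exists (val a); rewrite -Ha; congr phi; exact: val_inj.
  by exists (f a).
move=> a b; have := Hlab (f a) (f b).
have -> : (f a == f b) = (a == b) by rewrite -(inj_eq val_inj).
exact.
Qed.
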